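(* Let $d\ge2$ and let $\mathcal T_d=(t_{i-j})_{0\le i,j\le d-1}$ be a complex Toeplitz matrix which is invertible, and assume that $\mathcal T_{d-1}=(t_{i-j})_{0\le i,j\le d-2}$ is singular. For $\gamma,\delta\in\mathbb C$ let $$\mathcal T_{d+1}=\begin{pmatrix}\mathcal T_d & (\gamma,t_{-d+1},\dots,t_{-1})^T\\ (\delta,t_{d-1},\dots,t_1)& t_0\end{pmatrix}.$$ Let $\mathbf V_-=(0,t_{-d+1},\dots,t_{-1})^T$, $\mathbf V_+=(0,t_{d-1},\dots,t_1)^T$ and $\mathbf e_0=(1,0,\dots,0)^T$ in $\mathbb C^d$. Then $$\det(\mathcal T_{d+1})=-\det(\mathcal T_d)\big(\gamma\,\mathbf V_+^T\mathcal T_d^{-1}\mathbf e_0+\delta\,\mathbf e_0^T\mathcal T_d^{-1}\mathbf V_-+\mathbf V_+^T\mathcal T_d^{-1}\mathbf V_--t_0\big),$$ and neither $\mathbf V_+^T\mathcal T_d^{-1}\mathbf e_0$ nor $\mathbf e_0^T\mathcal T_d^{-1}\mathbf V_-$ is zero. *)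

(* Defs.v *)
From HB Require Import structures.
From mathcomp Require Import all_boot all_order all_algebra.
From mathcomp Require Import complex.
From mathcomp Require Import reals.
Set Implicit Arguments. Unset Strict Implicit. Unset Printing Implicit Defensive.
Import Order.TTheory GRing.Theory Num.Theory.
Local Open Scope ring_scope.

Definition toeplitz (C : pzRingType) (t : int -> C) (n : nat) : 'M[C]_n :=
  \matrix_(i < n, j < n) t (i%:Z - j%:Z).

(* The (d+1)x(d+1) bordered matrix T_{d+1} of the paper: the Toeplitz matrix
   of size d+1 except that the top-right corner is gamma and the bottom-left
   corner is delta. *)
Definition bordered (C : pzRingType) (t : int -> C) (d : nat) (g dl : C)
  : 'M[C]_d.+1 :=
  \matrix_(i < d.+1, j < d.+1)
    if (i == 0%N :> nat) && (j == d :> nat) then g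
    else if (i == d :> nat) && (j == 0%N :> nat) then dl
    else t (i%:Z - j%:Z).

Definition Vminus (C : pzRingType) (t : int -> C) (d : nat) : 'cV[C]_d :=
  \col_(i < d) if (i == 0%N :> nat) then 0 else t (i%:Z - d%:Z).

Definition Vplus (C : pzRingType) (t : int -> C) (d : nat) : 'cV[C]_d :=
  \col_(i < d) if (i == 0%N :> nat) then 0 else t (d%:Z - i%:Z).

Definition e0 (C : pzRingType) (d : nat) : 'cV[C]_d :=
  \col_(i < d) if (i == 0%N :> nat) then 1 else 0.

(* Main.v *)
Require Import Defs.
From HB Require Import structures.
From mathcomp Require Import all_boot all_order all_algebra.
From mathcomp Require Import complex.
From mathcomp Require Import reals.
From mathcomp Require Import ring.
Import Order.TTheory GRing.Theory Num.Theory.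
Local Open Scope ring_scope.

Lemma schur (F : fieldType) n (A : 'M[F]_n) (c : 'cV_n) (r : 'rV_n) (s : 'M_1) :
  A \in unitmx -> \det (block_mx A c r s) = \det A * (s - r *m invmx A *m c) 0 0.
Proof.
move=> uA.
have -> : block_mx A c r s = block_mx 1%:M 0 (r *m invmx A) 1%:M *m
   block_mx A c 0 (s - r *m invmx A *m c).
  rewrite mulmx_block !mul1mx !mul0mx !addr0 ?add0r mulmxKV // ?mul1mx ?mul0mx ?addr0.
  by rewrite addrC subrK.
by rewrite det_mulmx det_lblock det_ublock !det1 det_mx11 !mul1r.
Qed.

Lemma det_castmx (F : comPzRingType) n m (e : n = m) (A : 'M[F]_n) :
  \det (castmx (e, e) A) = \det A.
Proof. by case: m / e; rewrite castmx_id. Qed.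

Lemma bordered_block (F : fieldType) (t : int -> F) n g dl :
  bordered t n.+1 g dl = castmx (addn1 n.+1, addn1 n.+1)
    (block_mx (toeplitz t n.+1) (g *: e0 F n.+1 + Vminus t n.+1)
       ((dl *: e0 F n.+1 + Vplus t n.+1)^T) (t 0)%:M).
Proof.
apply/matrixP => i j; rewrite castmxE /=.
case: (split_ordP (cast_ord (esym (addn1 n.+1)) i)) => i' Hi;
  case: (split_ordP (cast_ord (esym (addn1 n.+1)) j)) => j' Hj; rewrite Hi Hj.
- move: (congr1 val Hi) (congr1 val Hj) => /= Ei Ej.
  rewrite block_mxEul !mxE Ei Ej (ltn_eqF (ltn_ord j')) (ltn_eqF (ltn_ord i')) !andbF.
  done.
- move: (congr1 val Hi) (congr1 val Hj) => /= Ei Ej.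
  rewrite block_mxEur !mxE Ei Ej ord1 addn0 eqxx (ltn_eqF (ltn_ord i')) andbT.
  by case: eqP => _; rewrite ?mulr1 ?mulr0 ?addr0 ?add0r.
- move: (congr1 val Hi) (congr1 val Hj) => /= Ei Ej.
  rewrite block_mxEdl !mxE Ei Ej ord1 addn0 eqxx /=.
  by case: eqP => _; rewrite ?mulr1 ?mulr0 ?addr0 ?add0r.
- move: (congr1 val Hi) (congr1 val Hj) => /= Ei Ej.
  rewrite block_mxEdr !mxE Ei Ej.
  by rewrite !ord1 addn0 /= eqxx subrr.
Qed.

Lemma mulmx_e0 (F : fieldType) m n (A : 'M[F]_(m, n.+1)) i :
  (A *m e0 F n.+1) i 0 = A i 0.
Proof.
rewrite mxE big_ord_recl !mxE /= mulr1 big1 ?addr0 // => j _.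
by rewrite !mxE lift0 mulr0.
Qed.

Lemma e0_mulmx (F : fieldType) m n (B : 'M[F]_(n.+1, m)) j :
  ((e0 F n.+1)^T *m B) 0 j = B 0 j.
Proof.
rewrite mxE big_ord_recl !mxE /= mul1r big1 ?addr0 // => k _.
by rewrite !mxE lift0 mul0r.
Qed.

Lemma shiftZ (i j : nat) : (i.+1)%:Z - (j.+1)%:Z = i%:Z - j%:Z.
Proof. by rewrite -addn1 -(addn1 j) !PoszD opprD addrACA subrr addr0. Qed.

Lemma inv00 (F : fieldType) (t : int -> F) n :
  toeplitz t n.+1 \in unitmx -> \det (toeplitz t n) = 0 ->
  invmx (toeplitz t n.+1) 0 0 = 0.
Proof.
move=> uT dT; rewrite /invmx uT !mxE /cofactor.
have -> : row' 0 (col' 0 (toeplitz t n.+1)) = toeplitz t n.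
  by apply/matrixP => i j; rewrite !mxE !lift0 shiftZ.
by rewrite dT !mulr0.
Qed.

Lemma inord_over n : inord n.+1 = ord0 :> 'I_n.+1.
Proof. by apply/val_inj; rewrite /= /inord /insubd insubF ?ltnn. Qed.

Lemma a_neq0 (F : fieldType) (t : int -> F) n :
  toeplitz t n.+1 \in unitmx -> \det (toeplitz t n) = 0 ->
  ((Vplus t n.+1)^T *m invmx (toeplitz t n.+1) *m e0 _ n.+1) 0 0 != 0.
Proof.
move=> uT dT; set T := toeplitz t n.+1; rewrite -mulmxA.
set x := invmx T *m e0 _ n.+1.
have Tx : T *m x = e0 _ _ by rewrite /x mulKVmx.
have x0 : x 0 0 = 0 by rewrite /x mulmx_e0 inv00.
clearbody x.
have rows : forall i : 'I_n,
    \sum_(j < n) t (i%:Z - j%:Z) * x (lift ord0 j) 0 = 0.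
  move=> i; have := congr1 (fun M : 'M[F]_(n.+1,1) => M (lift ord0 i) 0) Tx.
  rewrite /= !mxE big_ord_recl x0 mulr0 add0r lift0 /= => H; rewrite -[RHS]H.
  by apply: eq_bigr => j _; rewrite !mxE !lift0 shiftZ.
have xl : forall j : 'I_n, x (inord j.+1) 0 = x (lift ord0 j) 0.
  by move=> j; congr (x _ 0); apply/val_inj; rewrite /= inordK ?lift0 // ltnS.
apply/negP => /eqP Ha.
have Ha' : \sum_(j < n) t (n%:Z - j%:Z) * x (lift ord0 j) 0 = 0.
  rewrite -[RHS]Ha !mxE big_ord_recl !mxE /= mul0r add0r.
  by apply: eq_bigr => j _; rewrite !mxE lift0 /= shiftZ.
set z : 'cV_(n.+1) := \col_(i < n.+1) x (inord i.+1) 0.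
have Tz : T *m z = 0.
  apply/matrixP => i k; rewrite ord1 !mxE big_ord_recr /= !mxE inord_over x0 mulr0 addr0.
  have E : forall (i0 : nat), \sum_(j < n) T i (widen_ord (leqnSn n) j) * z (widen_ord (leqnSn n) j) 0 =
     \sum_(j < n) t (i%:Z - j%:Z) * x (lift ord0 j) 0.
    by move=> _; apply: eq_bigr => j _; rewrite !mxE /= xl.
  rewrite (E 0%N).
  case: (ltnP i n) => Hi.
    exact: (rows (Ordinal Hi)).
  have -> : (i : nat) = n by apply/eqP; rewrite eqn_leq Hi andbT -ltnS ltn_ord.
  exact: Ha'.
have z0 : z = 0 by rewrite -(mulKmx uT z) Tz mulmx0.
have x00 : x = 0.
  apply/matrixP => k l; rewrite ord1 !mxE.
  case: (unliftP ord0 k) => [j ->|->] //.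
  have := congr1 (fun M : 'M[F]_(n.+1,1) => M (widen_ord (leqnSn n) j) 0) z0.
  by rewrite /= !mxE /= xl.
have := congr1 (fun M : 'M[F]_(n.+1,1) => M 0 0) Tx.
by rewrite x00 mulmx0 !mxE /= => /eqP; rewrite eq_sym oner_eq0.
Qed.

Lemma trDZ (F : fieldType) n (k : F) (u v : 'cV[F]_n) : (k *: u + v)^T = k *: u^T + v^T.
Proof. by apply/matrixP => i j; rewrite !mxE. Qed.

Lemma fin_alg (F : comRingType) (D s x y A B C : F) :
  D * (s - (x * y * 0 + y * A + (x * B + C))) = - D * (y * A + x * B + C - s).
Proof. by ring. Qed.

Lemma entry_lin (F : fieldType) (M1 M2 M3 M4 : 'M[F]_1) (s k1 k2 k3 : F) :
  (s%:M - (k1 *: M1 + k2 *: M2 + (k3 *: M3 + M4))) 0 0 =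
  s - (k1 * M1 0 0 + k2 * M2 0 0 + (k3 * M3 0 0 + M4 0 0)).
Proof. by rewrite !mxE. Qed.

Lemma b_neq0 (F : fieldType) (t : int -> F) n :
  toeplitz t n.+1 \in unitmx -> \det (toeplitz t n) = 0 ->
  ((e0 _ n.+1)^T *m invmx (toeplitz t n.+1) *m Vminus t n.+1) 0 0 != 0.
Proof.
move=> uT dT.
pose t' := fun k : int => t (- k).
have Tt : forall m, toeplitz t' m = (toeplitz t m)^T.
  by move=> m; apply/matrixP => i j; rewrite !mxE /t' opprB.
have Vt : Vminus t n.+1 = Vplus t' n.+1.
  by apply/matrixP => i j; rewrite !mxE /t' opprB.
have := @a_neq0 F t' n.
rewrite !Tt unitmx_tr det_tr => /(_ uT dT).
rewrite -Vt -trmx_inv -[e0 F n.+1]trmxK -!trmx_mul.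
have tr00 : forall M : 'M[F]_1, M^T 0 0 = M 0 0 by move=> M; rewrite mxE.
by rewrite tr00 trmxK mulmxA.
Qed.

Theorem proposition14 (R : realType) (d : nat) (t : int -> R[i]) (g dl : R[i]) :
  (2 <= d)%N ->
  toeplitz t d \in unitmx ->
  \det (toeplitz t d.-1) = 0 ->
  let Td := toeplitz t d in
  let a := ((Vplus t d)^T *m invmx Td *m e0 _ d) ord0 ord0 in
  let b := ((e0 _ d)^T *m invmx Td *m Vminus t d) ord0 ord0 in
  let c := ((Vplus t d)^T *m invmx Td *m Vminus t d) ord0 ord0 in
  \det (bordered t d g dl) = - \det Td * (g * a + dl * b + c - t 0)
  /\ a != 0 /\ b != 0.
Proof.
case: d => [|n] // d2 uT dT /=.
split; last by split; [exact: a_neq0 | exact: b_neq0].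
rewrite bordered_block det_castmx schur //.
rewrite trDZ !mulmxDr !mulmxDl -!scalemxAl -!scalemxAr ?scalerA.
rewrite entry_lin -(mulmxA (e0 _ _)^T _ (e0 _ _)) e0_mulmx mulmx_e0 inv00 //.
exact: fin_alg.
Qed.
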